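(* Let $W\subset S^1$ with $W\cong\{0,\tfrac14,\tfrac34,a\}$ for some $a\in S^1\setminus\{0,\tfrac14,\tfrac12,\tfrac34\}$. Then $P(W)$ holds.
   Context: Identify $S^1$ with $\mathbb{R}/\mathbb{Z}$. The group $O(2)$ acts on $S^1$ by translations $x\mapsto x+a$ and reflections $x\mapsto -x+2a$. A coloring $c:S^1\to\{R,B\}$ is distinguishing if no non-identity $\gamma\in O(2)$ satisfies $c\circ\gamma=c$. For $W\subset S^1$ with trivial pointwise stabilizer in $O(2)$, $P(W)$ holds if every precoloring $c:S^1\setminus W\to\{R,B\}$ extends to a distinguishing coloring of $S^1$. Write $W\cong W'$ if $W'=\gamma(W)$ for some $\gamma\in O(2)$. *)

(* Defs.v *)
(* S^1 = R/Z modelled by reals modulo integers. *)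
From Stdlib Require Import Reals.
Open Scope R_scope.

Definition eqS1 (x y : R) : Prop := exists k : Z, x - y = IZR k.

Inductive O2 : Type :=
| Transl : R -> O2
| Refl : R -> O2.

Definition act (g : O2) (x : R) : R :=
  match g with
  | Transl a => x + a
  | Refl a => - x + 2 * a
  end.

Definition is_id (g : O2) : Prop := forall x : R, eqS1 (act g x) x.

Definition on_S1 (c : R -> bool) : Prop := forall x y : R, eqS1 x y -> c x = c y.

Definition distinguishing (c : R -> bool) : Prop :=
  forall g : O2, (forall x : R, c (act g x) = c x) -> is_id g.

Definition trivial_pointwise_stab (W : R -> Prop) : Prop :=
  forall g : O2, (forall x : R, W x -> eqS1 (act g x) x) -> is_id g.

(* P(W): every precoloring of S^1 \ W extends to a distinguishing coloring.
   A precoloring is given as a coloring c0 of S^1 whose values on W are ignored. *)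
Definition P (W : R -> Prop) : Prop :=
  forall c0 : R -> bool, on_S1 c0 ->
    exists c : R -> bool, on_S1 c /\ distinguishing c /\
      (forall x : R, ~ W x -> c x = c0 x).

Definition congr_sets (W W' : R -> Prop) : Prop :=
  exists g : O2, forall y : R, W' y <-> exists x : R, W x /\ eqS1 (act g x) y.

Definition W0 (a : R) (x : R) : Prop :=
  eqS1 x 0 \/ eqS1 x (1/4) \/ eqS1 x (3/4) \/ eqS1 x a.

(* Main.v *)
Require Import Defs.
From Stdlib Require Import Reals Lra Lia ZArith.
From Stdlib Require Import ClassicalEpsilon Classical.
Open Scope R_scope.

Lemma eqS1_refl x : eqS1 x x.
Proof. exists 0%Z. simpl. ring. Qed.
Lemma eqS1_sym x y : eqS1 x y -> eqS1 y x.
Proof. intros [k Hk]. exists (-k)%Z. rewrite opp_IZR. lra. Qed.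
Lemma eqS1_trans x y z : eqS1 x y -> eqS1 y z -> eqS1 x z.
Proof. intros [k Hk] [m Hm]. exists (k+m)%Z. rewrite plus_IZR. lra. Qed.
Lemma eqS1_add x y x' y' : eqS1 x y -> eqS1 x' y' -> eqS1 (x + x') (y + y').
Proof. intros [k Hk] [m Hm]. exists (k+m)%Z. rewrite plus_IZR. lra. Qed.
Lemma eqS1_sub x y x' y' : eqS1 x y -> eqS1 x' y' -> eqS1 (x - x') (y - y').
Proof. intros [k Hk] [m Hm]. exists (k-m)%Z. rewrite minus_IZR. lra. Qed.
Lemma eqS1_shift x y x' y' (k : Z) : x - y = x' - y' + IZR k -> eqS1 x' y' -> eqS1 x y.
Proof. intros H [m Hm]. exists (m+k)%Z. rewrite plus_IZR. lra. Qed.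
Lemma eqS1_shift_iff x y x' y' (k : Z) : x - y = x' - y' + IZR k -> (eqS1 x y <-> eqS1 x' y').
Proof. intros H; split.
  - apply eqS1_shift with (k := (-k)%Z). rewrite opp_IZR. lra.
  - apply eqS1_shift with (k := k). lra. Qed.
Lemma eqS1_eq x y : x = y -> eqS1 x y.
Proof. intros ->. apply eqS1_refl. Qed.

Lemma not_eqS1_01 x : 0 < x < 1 -> ~ eqS1 x 0.
Proof. intros [H1 H2] [k Hk]. rewrite Rminus_0_r in Hk. subst x.
  apply lt_IZR in H1. replace 1 with (IZR 1) in H2 by reflexivity. apply lt_IZR in H2. lia. Qed.

Lemma half x : eqS1 (2 * x) 0 -> eqS1 x 0 \/ eqS1 x (1/2).
Proof. intros [k Hk]. destruct (Zeven_odd_dec k) as [He|Ho].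
- destruct (Zeven_ex _ He) as [m ->]. left. exists m. rewrite mult_IZR in Hk. simpl in Hk. lra.
- destruct (Zodd_ex _ Ho) as [m ->]. right. exists m. rewrite plus_IZR, mult_IZR in Hk. simpl in Hk. lra.
Qed.

Definition dec (P : Prop) : bool := if excluded_middle_informative P then true else false.
Lemma dec_t (P : Prop) : P -> dec P = true.
Proof. unfold dec; destruct (excluded_middle_informative P); tauto. Qed.
Lemma dec_f (P : Prop) : ~ P -> dec P = false.
Proof. unfold dec; destruct (excluded_middle_informative P); tauto. Qed.
Lemma dec_ext (P Q : Prop) : (P <-> Q) -> dec P = dec Q.
Proof. intros H. destruct (classic P). rewrite !dec_t; tauto. rewrite !dec_f; tauto. Qed.
Lemma ydiff (X Y : R -> bool) w : on_S1 X -> on_S1 Y -> Y w = negb (X w) ->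
  forall x, eqS1 x w -> Y x = negb (X x).
Proof. intros HX HY Hw x Hx. rewrite (HY x w Hx), (HX x w Hx). exact Hw. Qed.

Lemma negb_neq b : negb b = b -> False.
Proof. destruct b; discriminate. Qed.

Lemma classify (X : R -> bool) : ~ distinguishing X ->
  (exists t, ~ eqS1 t 0 /\ forall x, X (x + t) = X x) \/ (exists b, forall x, X (-x + b) = X x).
Proof.
  intros H. unfold distinguishing in H. apply not_all_ex_not in H. destruct H as [g Hg].
  apply imply_to_and in Hg. destruct Hg as [Hinv Hnid]. destruct g as [t|c].
  - left. exists t. split; [|exact Hinv]. intros Ht. apply Hnid. intros x. simpl.
    apply eqS1_shift with (x' := t) (y' := 0) (k := 0%Z). simpl. ring. exact Ht.
  - right. exists (2*c). exact Hinv.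
Qed.

Lemma TT (X Y : R -> bool) w t t' : on_S1 X -> on_S1 Y ->
  (forall x, ~ eqS1 x w -> Y x = X x) -> Y w = negb (X w) ->
  ~ eqS1 t 0 -> ~ eqS1 t' 0 ->
  (forall x, X (x + t) = X x) -> (forall x, Y (x + t') = Y x) -> False.
Proof.
  intros HX HY Hd Hw Ht Ht' PX PY.
  assert (H1 : X (w - t') = negb (X w)).
  { assert (Hn : ~ eqS1 (w - t') w).
    { intros Hc. apply Ht'. apply eqS1_shift with (x' := w) (y' := w - t') (k := 0%Z).
      simpl; ring. apply eqS1_sym; exact Hc. }
    rewrite <- (Hd _ Hn). rewrite <- PY. rewrite <- Hw. apply HY. apply eqS1_eq. ring. }
  assert (Hx : X (w - t' + t) = negb (X w)) by (rewrite PX; exact H1).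
  assert (Hxt : X (w - t' + t + t') = X w).
  { rewrite <- (PX w). apply HX. apply eqS1_eq. ring. }
  destruct (classic (eqS1 (w - t' + t) w)) as [Hc|Hc].
  - assert (PX' : forall y, X (y + t') = X y).
    { intros y. rewrite <- (PX y). apply HX. apply eqS1_shift with (x' := w) (y' := w - t' + t) (k := 0%Z).
      simpl; ring. apply eqS1_sym; exact Hc. }
    specialize (PX' (w - t')). rewrite H1 in PX'.
    replace (w - t' + t') with w in PX' by ring. apply (negb_neq (X w)). congruence.
  - rewrite <- (Hd _ Hc) in Hx. rewrite <- (PY (w - t' + t)) in Hx.
    destruct (classic (eqS1 (w - t' + t + t') w)) as [Hc2|Hc2].
    + apply Ht. apply eqS1_shift with (x' := w - t' + t + t') (y' := w) (k := 0%Z). simpl; ring. exact Hc2.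
    + rewrite (Hd _ Hc2) in Hx. rewrite Hxt in Hx. apply (negb_neq (X w)). congruence.
Qed.

Lemma TR (X Y : R -> bool) w t b' : on_S1 X -> on_S1 Y ->
  (forall x, ~ eqS1 x w -> Y x = X x) -> Y w = negb (X w) ->
  ~ eqS1 t 0 -> ~ eqS1 t (1/2) -> ~ eqS1 b' (2 * w) ->
  (forall x, X (x + t) = X x) -> (forall x, Y (- x + b') = Y x) -> False.
Proof.
  intros HX HY Hd Hw Ht Ht2 Hb PX PY.
  assert (Yd := ydiff X Y w HX HY Hw).
  assert (H1 : X (- w + b') = negb (X w)).
  { assert (Hn : ~ eqS1 (- w + b') w).
    { intros Hc. apply Hb. apply eqS1_shift with (x' := - w + b') (y' := w) (k := 0%Z). simpl; ring. exact Hc. }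
    rewrite <- (Hd _ Hn). rewrite PY. exact Hw. }
  assert (PX' : forall y, X (y - t) = X y).
  { intros y. rewrite <- (PX (y - t)). apply HX. apply eqS1_eq. ring. }
  assert (H2 : eqS1 (- (w + t) + b') w).
  { destruct (classic (eqS1 (- (w + t) + b') w)) as [Hc|Hc]; [exact Hc|].
    exfalso. assert (E := PY (w + t)). rewrite (Hd _ Hc) in E.
    destruct (classic (eqS1 (w + t) w)) as [Hc2|Hc2].
    - apply Ht. apply eqS1_shift with (x' := w + t) (y' := w) (k := 0%Z). simpl; ring. exact Hc2.
    - rewrite (Hd _ Hc2) in E. rewrite PX in E.
      replace (- (w + t) + b') with ((- w + b') - t) in E by ring. rewrite PX', H1 in E.
      exact (negb_neq _ E). }
  assert (H3 : eqS1 (- w + b' + t) w).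
  { destruct (classic (eqS1 (- w + b' + t) w)) as [Hc|Hc]; [exact Hc|].
    exfalso. assert (E := PY (- w + b' + t)). rewrite (Hd _ Hc) in E.
    destruct (classic (eqS1 (- (- w + b' + t) + b') w)) as [Hc2|Hc2].
    - apply Ht. apply eqS1_shift with (x' := w) (y' := - (- w + b' + t) + b') (k := 0%Z). simpl; ring.
      apply eqS1_sym. exact Hc2.
    - rewrite (Hd _ Hc2) in E. rewrite PX in E.
      replace (- (- w + b' + t) + b') with (w - t) in E by ring. rewrite PX', H1 in E.
      apply (negb_neq (X w)). congruence. }
  assert (H4 : eqS1 (2 * t) 0).
  { apply eqS1_shift with (x' := - w + b' + t - (- (w + t) + b')) (y' := w - w) (k := 0%Z).
    simpl; ring. apply eqS1_sub; assumption. }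
  destruct (half _ H4); contradiction.
Qed.

Lemma RR (X Y : R -> bool) w b b' : on_S1 X -> on_S1 Y ->
  (forall x, ~ eqS1 x w -> Y x = X x) -> Y w = negb (X w) ->
  ~ eqS1 b' (2 * w) ->
  (forall x, X (- x + b) = X x) -> (forall x, Y (- x + b') = Y x) ->
  forall x, X (x + (b - b')) = xorb (X x) (dec (eqS1 x w \/ eqS1 x (b' - w))).
Proof.
  intros HX HY Hd Hw Hb PX PY x.
  assert (Yd := ydiff X Y w HX HY Hw).
  replace (x + (b - b')) with (- (- x + b') + b) by ring. rewrite PX.
  destruct (classic (eqS1 x w)) as [Hc|Hc].
  - rewrite dec_t by tauto.
    assert (Hn : ~ eqS1 (- x + b') w).
    { intros Hc2. apply Hb. apply eqS1_shift with (x' := (- x + b') + x) (y' := w + w) (k := 0%Z).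
      simpl; ring. apply eqS1_add; assumption. }
    rewrite <- (Hd _ Hn), PY, (Yd _ Hc). destruct (X x); reflexivity.
  - destruct (classic (eqS1 x (b' - w))) as [Hc2|Hc2].
    + rewrite dec_t by tauto.
      assert (He : eqS1 (- x + b') w).
      { apply eqS1_shift with (x' := b' - w) (y' := x) (k := 0%Z). simpl; ring. apply eqS1_sym; exact Hc2. }
      assert (E := Yd _ He). rewrite PY, (Hd _ Hc) in E. rewrite E. destruct (X x), (X (- x + b')); simpl in *; congruence.
    + rewrite dec_f by tauto.
      assert (Hn : ~ eqS1 (- x + b') w).
      { intros He. apply Hc2. apply eqS1_shift with (x' := w) (y' := - x + b') (k := 0%Z). simpl; ring.
        apply eqS1_sym; exact He. }
      rewrite <- (Hd _ Hn), PY, (Hd _ Hc). destruct (X x); reflexivity.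
Qed.
Lemma eqS1_shift_iff_neg x y x' y' (k : Z) : x - y = - (x' - y') + IZR k -> (eqS1 x y <-> eqS1 x' y').
Proof. intros H. rewrite (eqS1_shift_iff x y y' x' k) by lra. split; apply eqS1_sym. Qed.

Ltac s1i := first
  [ apply (eqS1_shift_iff _ _ _ _ 0%Z); simpl; lra
  | apply (eqS1_shift_iff _ _ _ _ 1%Z); simpl; lra
  | apply (eqS1_shift_iff _ _ _ _ (-1)%Z); simpl; lra
  | apply (eqS1_shift_iff _ _ _ _ 2%Z); simpl; lra
  | apply (eqS1_shift_iff _ _ _ _ (-2)%Z); simpl; lra
  | apply (eqS1_shift_iff_neg _ _ _ _ 0%Z); simpl; lra
  | apply (eqS1_shift_iff_neg _ _ _ _ 1%Z); simpl; lra
  | apply (eqS1_shift_iff_neg _ _ _ _ (-1)%Z); simpl; lra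
  | apply (eqS1_shift_iff_neg _ _ _ _ 2%Z); simpl; lra
  | apply (eqS1_shift_iff_neg _ _ _ _ (-2)%Z); simpl; lra ].

(* transfer a hypothesis to a goal with the same difference modulo integers *)
Ltac s1tr H := let H' := fresh "Htr" in pose proof H as H';
  try (match type of H' with ?v => unfold v in H' end);
  try (match goal with |- ?v => unfold v end);
  match type of H' with eqS1 ?a ?c => match goal with |- eqS1 ?x ?y =>
  apply (proj2 (ltac:(s1i) : eqS1 x y <-> eqS1 a c) H') end end.

Lemma or_iff (P1 P2 Q1 Q2 : Prop) : (P1 <-> Q1) -> (P2 <-> Q2) -> (P1 \/ P2 <-> Q1 \/ Q2).
Proof. tauto. Qed.
Lemma or_iff_Fl (P1 P2 Q2 : Prop) : ~ P1 -> (P2 <-> Q2) -> (P1 \/ P2 <-> Q2).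
Proof. tauto. Qed.
Lemma or_iff_Fr (P1 P2 Q1 : Prop) : ~ P2 -> (P1 <-> Q1) -> (P1 \/ P2 <-> Q1).
Proof. tauto. Qed.

Lemma nq14_34 : ~ eqS1 (3/4) (1/4).
Proof. intros H. apply (not_eqS1_01 (1/2)). lra. s1tr H. Qed.
Lemma nq14_34' : ~ eqS1 (1/4) (3/4).
Proof. intros H. apply nq14_34. apply eqS1_sym. exact H. Qed.
Lemma nh0 : ~ eqS1 (1/2) 0.
Proof. apply not_eqS1_01. lra. Qed.
Lemma xorb_cancel a m1 m2 : xorb a m1 = xorb a m2 -> m1 = m2.
Proof. destruct a, m1, m2; simpl; congruence. Qed.

Lemma final (A : R -> bool) (b b1 b2 : R) :
  on_S1 A -> A 0 <> A (1/2) ->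
  ~ eqS1 b 0 -> ~ eqS1 b (1/2) -> ~ eqS1 b1 0 -> ~ eqS1 b1 (1/2) -> ~ eqS1 b2 0 -> ~ eqS1 b2 (1/2) ->
  (forall x, A (x + (b - b1)) = xorb (A x) (dec (eqS1 x (1/4) \/ eqS1 x (b1 - 1/4)))) ->
  (forall x, A (x + (b - b2)) = xorb (A x) (dec (eqS1 x (3/4) \/ eqS1 x (b2 - 3/4)))) ->
  False.
Proof.
  intros HA H0 nb0 nbh nb10 nb1h nb20 nb2h R1 R2.
  pose (m1 := fun x => dec (eqS1 x (1/4) \/ eqS1 x (b1 - 1/4))).
  pose (m2 := fun x => dec (eqS1 x (3/4) \/ eqS1 x (b2 - 3/4))).
  assert (R1' : forall x, A (x + (b - b1)) = xorb (A x) (m1 x)) by exact R1.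
  assert (R2' : forall x, A (x + (b - b2)) = xorb (A x) (m2 x)) by exact R2.
  clear R1 R2. rename R1' into R1. rename R2' into R2.
  assert (comm : forall x, xorb (m2 x) (m1 (x + (b - b2))) = xorb (m1 x) (m2 (x + (b - b1)))).
  { intros x. assert (E1 := R1 (x + (b - b2))). assert (E2 := R2 x).
    assert (E3 := R2 (x + (b - b1))). assert (E4 := R1 x).
    assert (Eq : A (x + (b - b2) + (b - b1)) = A (x + (b - b1) + (b - b2))) by (apply HA; apply eqS1_eq; ring).
    rewrite E1, E3, E2, E4 in Eq. revert Eq.
    destruct (A x), (m1 x), (m2 x), (m1 (x + (b - b2))), (m2 (x + (b - b1))); simpl; congruence. }
  destruct (classic (eqS1 b1 b2)) as [H12|H12].
  { assert (E1 := R1 (1/4)). assert (E2 := R2 (1/4)).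
    assert (Em2 : m2 (1/4) = false).
    { apply dec_f. intros [H|H]. exact (nq14_34' H). apply nb20. s1tr H. }
    assert (Em1 : m1 (1/4) = true) by (apply dec_t; left; apply eqS1_refl).
    rewrite Em1 in E1. rewrite Em2 in E2.
    assert (Eq : A (1/4 + (b - b1)) = A (1/4 + (b - b2))) by (apply HA; s1tr H12).
    rewrite E1, E2 in Eq. destruct (A (1/4)); discriminate. }
  set (al := eqS1 (b - b1) 0). set (be := eqS1 (b - b2) 0).
  set (g1 := eqS1 (b - b1) (1/2)). set (g2 := eqS1 (b - b2) (1/2)).
  set (s0 := eqS1 (b1 + b2 - b) 0). set (sh := eqS1 (b1 + b2 - b) (1/2)).
  set (de := eqS1 (b2 - b1) (1/2)).
  set (e1 := eqS1 (b1 + b - b2) (1/2)). set (e2 := eqS1 (b2 + b - b1) (1/2)).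
  assert (Cq : xorb true (dec (g2 \/ s0)) = xorb false (dec (al \/ sh))).
  { assert (C := comm (3/4)). unfold m1, m2 in C; cbv beta in C.
    rewrite (dec_t (eqS1 (3/4) (3/4) \/ _)) in C by (left; apply eqS1_refl).
    rewrite (dec_f (eqS1 (3/4) (1/4) \/ _)) in C.
    2:{ intros [H|H]. exact (nq14_34 H). apply nb10. s1tr H. }
    rewrite (dec_ext (eqS1 (3/4 + (b - b2)) (1/4) \/ _) (g2 \/ s0)) in C by (apply or_iff; unfold g2, s0; s1i).
    rewrite (dec_ext (eqS1 (3/4 + (b - b1)) (3/4) \/ _) (al \/ sh)) in C by (apply or_iff; unfold al, sh; s1i).
    exact C. }
  assert (Cp : xorb false (dec (be \/ sh)) = xorb true (dec (g1 \/ s0))).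
  { assert (C := comm (1/4)). unfold m1, m2 in C; cbv beta in C.
    rewrite (dec_t (eqS1 (1/4) (1/4) \/ _)) in C by (left; apply eqS1_refl).
    rewrite (dec_f (eqS1 (1/4) (3/4) \/ _)) in C.
    2:{ intros [H|H]. exact (nq14_34' H). apply nb20. s1tr H. }
    rewrite (dec_ext (eqS1 (1/4 + (b - b2)) (1/4) \/ _) (be \/ sh)) in C by (apply or_iff; unfold be, sh; s1i).
    rewrite (dec_ext (eqS1 (1/4 + (b - b1)) (3/4) \/ _) (g1 \/ s0)) in C by (apply or_iff; unfold g1, s0; s1i).
    exact C. }
  assert (Cb1 : xorb (dec de) (dec (e1 \/ be)) = xorb true (dec g2)).
  { assert (C := comm (b1 - 1/4)). unfold m1, m2 in C; cbv beta in C.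
    rewrite (dec_t (eqS1 (b1 - 1/4) (1/4) \/ _)) in C by (right; apply eqS1_refl).
    rewrite (dec_ext (eqS1 (b1 - 1/4) (3/4) \/ _) de) in C.
    2:{ apply or_iff_Fl. intros H; apply nb10; s1tr H. unfold de; s1i. }
    rewrite (dec_ext (eqS1 (b1 - 1/4 + (b - b2)) (1/4) \/ _) (e1 \/ be)) in C by (apply or_iff; unfold e1, be; s1i).
    rewrite (dec_ext (eqS1 (b1 - 1/4 + (b - b1)) (3/4) \/ _) g2) in C.
    2:{ apply or_iff_Fl. intros H; apply nb0; s1tr H. unfold g2; s1i. }
    exact C. }
  assert (Cb2 : xorb true (dec g1) = xorb (dec de) (dec (e2 \/ al))).
  { assert (C := comm (b2 - 3/4)). unfold m1, m2 in C; cbv beta in C.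
    rewrite (dec_t (eqS1 (b2 - 3/4) (3/4) \/ _)) in C by (right; apply eqS1_refl).
    rewrite (dec_ext (eqS1 (b2 - 3/4 + (b - b2)) (1/4) \/ _) g1) in C.
    2:{ apply or_iff_Fl. intros H; apply nb0; s1tr H. unfold g1; s1i. }
    rewrite (dec_ext (eqS1 (b2 - 3/4) (1/4) \/ _) de) in C.
    2:{ apply or_iff_Fl. intros H; apply nb20; s1tr H. unfold de; s1i. }
    rewrite (dec_ext (eqS1 (b2 - 3/4 + (b - b1)) (3/4) \/ _) (e2 \/ al)) in C by (apply or_iff; unfold e2, al; s1i).
    exact C. }

  assert (Hbg : be -> g2 -> False).
  { intros h1 h2. apply nh0. assert (X := eqS1_sub _ _ _ _ h2 h1). s1tr X. }
  assert (Hag : al -> g1 -> False).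
  { intros h1 h2. apply nh0. assert (X := eqS1_sub _ _ _ _ h2 h1). s1tr X. }
  assert (Hab : al -> be -> False).
  { intros h1 h2. apply H12. assert (X := eqS1_sub _ _ _ _ h2 h1). s1tr X. }
  assert (Hgg : g1 -> g2 -> False).
  { intros h1 h2. apply H12. assert (X := eqS1_sub _ _ _ _ h1 h2). s1tr X. }
  destruct (classic de) as [Hde|Hde].
  -
    assert (ne1 : ~ e1).
    { intros h. apply nb0. assert (X := eqS1_add _ _ _ _ h Hde). s1tr X. }
    assert (ne2 : ~ e2).
    { intros h. apply nb0. assert (X := eqS1_sub _ _ _ _ h Hde). s1tr X. }
    rewrite (dec_t de Hde) in Cb1, Cb2.
    assert (Cb1' : dec be = dec g2).
    { apply (xorb_cancel true). rewrite <- Cb1. f_equal. apply dec_ext. tauto. }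
    assert (Cb2' : dec g1 = dec al).
    { apply (xorb_cancel true). rewrite Cb2. f_equal. apply dec_ext. tauto. }
    assert (nbe : ~ be).
    { intros h. rewrite (dec_t be h) in Cb1'. destruct (classic g2) as [h2|h2].
      exact (Hbg h h2). rewrite (dec_f g2 h2) in Cb1'. discriminate. }
    assert (ng2 : ~ g2).
    { intros h. rewrite (dec_t g2 h) in Cb1'. rewrite (dec_f be nbe) in Cb1'. discriminate. }
    assert (nal : ~ al).
    { intros h. rewrite (dec_t al h) in Cb2'. destruct (classic g1) as [h2|h2].
      exact (Hag h h2). rewrite (dec_f g1 h2) in Cb2'. discriminate. }
    assert (Hs : s0 \/ sh).
    { destruct (classic s0) as [h|h]; [left; exact h|]. destruct (classic sh) as [h'|h']; [right; exact h'|].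
      rewrite (dec_f (g2 \/ s0)) in Cq by tauto. rewrite (dec_f (al \/ sh)) in Cq by tauto. discriminate. }
    assert (Hb : eqS1 b 0 \/ eqS1 b (1/2) -> False) by tauto.
    assert (Heta : forall c, eqS1 (- (b - b2)) c -> eqS1 (c + c) (1/2) -> False).
    { intros c hc hcc. apply Hb. destruct Hs as [h|h].
      - assert (X := eqS1_sub _ _ _ _ (eqS1_add _ _ _ _ h Hde) (eqS1_add _ _ _ _ hc hc)).
        assert (X2 := eqS1_trans _ _ _ X (eqS1_sub _ _ _ _ (eqS1_refl (0 + 1/2)) hcc)). left. s1tr X2.
      - assert (X := eqS1_sub _ _ _ _ (eqS1_add _ _ _ _ h Hde) (eqS1_add _ _ _ _ hc hc)).
        assert (X2 := eqS1_trans _ _ _ X (eqS1_sub _ _ _ _ (eqS1_refl (1/2 + 1/2)) hcc)). right. s1tr X2. }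
    assert (Hbb : eqS1 (b1 - 1/4) (b2 - 3/4)) by s1tr Hde.
    assert (Em : m1 (- (b - b2)) = m2 (- (b - b2))).
    { unfold m1, m2. apply dec_ext. split.
      - intros [h|h]. exfalso. apply (Heta (1/4) h). apply eqS1_eq; lra.
        right. exact (eqS1_trans _ _ _ h Hbb).
      - intros [h|h]. exfalso. apply (Heta (3/4) h). apply (eqS1_shift _ _ (1/2) (1/2) 1%Z); [simpl; lra | apply eqS1_refl].
        right. exact (eqS1_trans _ _ _ h (eqS1_sym _ _ Hbb)). }
    assert (E0 := R2 (- (b - b2))). assert (E5 := R1 (- (b - b2))).
    assert (A0 : A (- (b - b2) + (b - b2)) = A 0) by (apply HA; apply eqS1_eq; ring).
    assert (A5 : A (- (b - b2) + (b - b1)) = A (1/2)) by (apply HA; s1tr Hde).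
    apply H0. rewrite <- A0, <- A5, E0, E5, Em. reflexivity.
  -
    rewrite (dec_f de Hde) in Cb1, Cb2.
    destruct (classic s0) as [Hs0|Hs0].
    + rewrite (dec_t (g2 \/ s0)) in Cq by tauto. rewrite (dec_t (g1 \/ s0)) in Cp by tauto.
      assert (nal : ~ al).
      { intros h. rewrite (dec_t (al \/ sh)) in Cq by tauto. discriminate. }
      assert (nbe : ~ be).
      { intros h. rewrite (dec_t (be \/ sh)) in Cp by tauto. discriminate. }
      assert (ng2 : ~ g2).
      { intros h. apply nb1h. assert (X := eqS1_add _ _ _ _ h Hs0). s1tr X. }
      assert (ng1 : ~ g1).
      { intros h. apply nb2h. assert (X := eqS1_add _ _ _ _ h Hs0). s1tr X. }
      rewrite (dec_f g2 ng2) in Cb1. rewrite (dec_f g1 ng1) in Cb2.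
      assert (he1 : e1).
      { destruct (classic e1) as [h|h]; [exact h|]. rewrite (dec_f (e1 \/ be)) in Cb1 by tauto. discriminate. }
      assert (he2 : e2).
      { destruct (classic e2) as [h|h]; [exact h|]. rewrite (dec_f (e2 \/ al)) in Cb2 by tauto. discriminate. }
      assert (X := eqS1_sub _ _ _ _ he1 he2).
      assert (X2 : eqS1 (2 * (b1 - b2)) 0) by s1tr X.
      destruct (half _ X2) as [h|h]. apply H12. s1tr h. apply Hde. s1tr h.
    + destruct (classic sh) as [Hsh|Hsh].
      * rewrite (dec_t (al \/ sh)) in Cq by tauto. rewrite (dec_t (be \/ sh)) in Cp by tauto.
        assert (ng2 : ~ g2).
        { intros h. rewrite (dec_t (g2 \/ s0)) in Cq by tauto. discriminate. }
        rewrite (dec_f g2 ng2) in Cb1.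
        assert (H : e1 \/ be).
        { destruct (classic (e1 \/ be)) as [h|h]; [exact h|]. rewrite (dec_f _ h) in Cb1. discriminate. }
        destruct H as [h|h].
        -- assert (X := eqS1_add _ _ _ _ h Hsh). assert (X2 : eqS1 (2 * b1) 0) by s1tr X.
           destruct (half _ X2); contradiction.
        -- apply nb1h. assert (X := eqS1_add _ _ _ _ h Hsh). s1tr X.
      * rewrite (dec_ext (g2 \/ s0) g2) in Cq by tauto.
        rewrite (dec_ext (al \/ sh) al) in Cq by tauto.
        rewrite (dec_ext (be \/ sh) be) in Cp by tauto.
        rewrite (dec_ext (g1 \/ s0) g1) in Cp by tauto.
        destruct (classic al) as [hal|hal].
        -- rewrite (dec_t al hal) in Cq.
           assert (ng1 : ~ g1) by (intros h; exact (Hag hal h)).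
           rewrite (dec_f g1 ng1) in Cp.
           destruct (classic be) as [hbe|hbe]. exact (Hab hal hbe).
           rewrite (dec_f be hbe) in Cp. discriminate.
        -- rewrite (dec_f al hal) in Cq.
           destruct (classic g2) as [hg2|hg2]; [|rewrite (dec_f g2 hg2) in Cq; discriminate].
           assert (ng1 : ~ g1) by (intros h; exact (Hgg h hg2)).
           rewrite (dec_f g1 ng1) in Cp.
           destruct (classic be) as [hbe|hbe]. exact (Hbg hbe hg2).
           rewrite (dec_f be hbe) in Cp. discriminate.
Qed.
Lemma K_T (X : R -> bool) t : on_S1 X -> X 0 <> X (1/2) -> (forall x, X (x + t) = X x) -> ~ eqS1 t (1/2).
Proof. intros HX H0 P Ht. apply H0. rewrite <- (P 0). apply HX. s1tr Ht. Qed.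
Lemma K_R0 (X : R -> bool) b a : on_S1 X -> X a <> X (-a) -> (forall x, X (- x + b) = X x) -> ~ eqS1 b 0.
Proof. intros HX H0 P Hb. apply H0. rewrite <- (P a). apply HX. s1tr Hb. Qed.
Lemma K_Rh (X : R -> bool) b : on_S1 X -> X 0 <> X (1/2) -> (forall x, X (- x + b) = X x) -> ~ eqS1 b (1/2).
Proof. intros HX H0 P Hb. apply H0. rewrite <- (P 0). apply HX. s1tr Hb. Qed.
Lemma n2w1 b : ~ eqS1 b (1/2) -> ~ eqS1 b (2 * (1/4)).
Proof. intros H1 H2. apply H1. s1tr H2. Qed.
Lemma n2w3 b : ~ eqS1 b (1/2) -> ~ eqS1 b (2 * (3/4)).
Proof. intros H1 H2. apply H1. s1tr H2. Qed.

Lemma abstract3 (A B E : R -> bool) (a : R) :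
  on_S1 A -> on_S1 B -> on_S1 E ->
  (forall x, ~ eqS1 x (1/4) -> B x = A x) -> B (1/4) = negb (A (1/4)) ->
  (forall x, ~ eqS1 x (3/4) -> E x = A x) -> E (3/4) = negb (A (3/4)) ->
  A 0 <> A (1/2) -> A a <> A (-a) ->
  B 0 <> B (1/2) -> B a <> B (-a) ->
  E 0 <> E (1/2) -> E a <> E (-a) ->
  ~ distinguishing A -> ~ distinguishing B -> ~ distinguishing E -> False.
Proof.
  intros HA HB HE dB wB dE wE KA1 KA2 KB1 KB2 KE1 KE2 nA nB nE.
  assert (dB' : forall x, ~ eqS1 x (1/4) -> A x = B x) by (intros; symmetry; auto).
  assert (wB' : A (1/4) = negb (B (1/4))) by (rewrite wB; destruct (A (1/4)); reflexivity).
  assert (dE' : forall x, ~ eqS1 x (3/4) -> A x = E x) by (intros; symmetry; auto).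
  assert (wE' : A (3/4) = negb (E (3/4))) by (rewrite wE; destruct (A (3/4)); reflexivity).
  destruct (classify A nA) as [[t [nt PA]] | [b PA]].
  - destruct (classify B nB) as [[t' [nt' PB]] | [b' PB]].
    + exact (TT A B (1/4) t t' HA HB dB wB nt nt' PA PB).
    + exact (TR A B (1/4) t b' HA HB dB wB nt (K_T A t HA KA1 PA) (n2w1 b' (K_Rh B b' HB KB1 PB)) PA PB).
  - assert (nbA0 := K_R0 A b a HA KA2 PA). assert (nbAh := K_Rh A b HA KA1 PA).
    destruct (classify B nB) as [[t' [nt' PB]] | [b1 PB]].
    + exact (TR B A (1/4) t' b HB HA dB' wB' nt' (K_T B t' HB KB1 PB) (n2w1 b nbAh) PB PA).
    + destruct (classify E nE) as [[t' [nt' PE]] | [b2 PE]].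
      * exact (TR E A (3/4) t' b HE HA dE' wE' nt' (K_T E t' HE KE1 PE) (n2w3 b nbAh) PE PA).
      * assert (nb10 := K_R0 B b1 a HB KB2 PB). assert (nb1h := K_Rh B b1 HB KB1 PB).
        assert (nb20 := K_R0 E b2 a HE KE2 PE). assert (nb2h := K_Rh E b2 HE KE1 PE).
        apply (final A b b1 b2 HA KA1 nbA0 nbAh nb10 nb1h nb20 nb2h).
        -- exact (RR A B (1/4) b b1 HA HB dB wB (n2w1 b1 nb1h) PA PB).
        -- exact (RR A E (3/4) b b2 HA HE dE wE (n2w3 b2 nb2h) PA PE).
Qed.
Definition col (c0 : R -> bool) (a : R) (e1 e3 : bool) (x : R) : bool :=
  if dec (eqS1 x 0) then negb (c0 (1/2)) else
  if dec (eqS1 x (1/4)) then e1 else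
  if dec (eqS1 x (3/4)) then e3 else
  if dec (eqS1 x a) then negb (c0 (- a)) else c0 x.

Lemma dec_S1 x y z : eqS1 x y -> dec (eqS1 x z) = dec (eqS1 y z).
Proof. intros H. apply dec_ext. split; intros H'.
  - exact (eqS1_trans _ _ _ (eqS1_sym _ _ H) H'). - exact (eqS1_trans _ _ _ H H'). Qed.

Lemma col_S1 c0 a e1 e3 : on_S1 c0 -> on_S1 (col c0 a e1 e3).
Proof. intros Hc x y H. unfold col. rewrite !(dec_S1 x y _ H). rewrite (Hc x y H). reflexivity. Qed.

Lemma n14_0 : ~ eqS1 (1/4) 0. Proof. apply not_eqS1_01; lra. Qed.
Lemma n34_0 : ~ eqS1 (3/4) 0. Proof. apply not_eqS1_01; lra. Qed.
Lemma n12_14 : ~ eqS1 (1/2) (1/4). Proof. intros H; apply n14_0; s1tr H. Qed.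
Lemma n12_34 : ~ eqS1 (1/2) (3/4). Proof. intros H; apply n34_0; s1tr H. Qed.


Lemma P_W0 (a : R) :
  ~ eqS1 a 0 -> ~ eqS1 a (1/4) -> ~ eqS1 a (1/2) -> ~ eqS1 a (3/4) -> P (W0 a).
Proof.
  intros na0 na1 na2 na3 c0 Hc0.
  assert (nma0 : ~ eqS1 (- a) 0) by (intros H; apply na0; s1tr H).
  assert (nma1 : ~ eqS1 (- a) (1/4)) by (intros H; apply na3; s1tr H).
  assert (nma3 : ~ eqS1 (- a) (3/4)) by (intros H; apply na1; s1tr H).
  assert (nmaa : ~ eqS1 (- a) a).
  { intros H. assert (H2 : eqS1 (2 * a) 0) by s1tr H. destruct (half _ H2); contradiction. }
  assert (nh_a : ~ eqS1 (1/2) a) by (intros H; apply na2; apply eqS1_sym; exact H).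
  assert (Agree : forall e1 e3 x, ~ W0 a x -> col c0 a e1 e3 x = c0 x).
  { intros e1 e3 x Hx. unfold W0 in Hx. unfold col.
    rewrite !dec_f by tauto. reflexivity. }
  assert (K1 : forall e1 e3, col c0 a e1 e3 0 <> col c0 a e1 e3 (1/2)).
  { intros e1 e3. unfold col. rewrite (dec_t (eqS1 0 0)) by apply eqS1_refl.
    rewrite (dec_f (eqS1 (1/2) 0)) by exact nh0. rewrite (dec_f (eqS1 (1/2) (1/4))) by exact n12_14.
    rewrite (dec_f (eqS1 (1/2) (3/4))) by exact n12_34. rewrite (dec_f (eqS1 (1/2) a)) by exact nh_a.
    destruct (c0 (1/2)); discriminate. }
  assert (K2 : forall e1 e3, col c0 a e1 e3 a <> col c0 a e1 e3 (- a)).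
  { intros e1 e3. unfold col. rewrite (dec_f (eqS1 a 0)) by exact na0.
    rewrite (dec_f (eqS1 a (1/4))) by exact na1. rewrite (dec_f (eqS1 a (3/4))) by exact na3.
    rewrite (dec_t (eqS1 a a)) by apply eqS1_refl.
    rewrite (dec_f (eqS1 (- a) 0)) by exact nma0. rewrite (dec_f (eqS1 (- a) (1/4))) by exact nma1.
    rewrite (dec_f (eqS1 (- a) (3/4))) by exact nma3. rewrite (dec_f (eqS1 (- a) a)) by exact nmaa.
    destruct (c0 (- a)); discriminate. }
  destruct (classic (distinguishing (col c0 a false false))) as [D|nA].
  { exists (col c0 a false false). split; [apply col_S1; exact Hc0|]. split; [exact D|]. apply Agree. }
  destruct (classic (distinguishing (col c0 a true false))) as [D|nB].
  { exists (col c0 a true false). split; [apply col_S1; exact Hc0|]. split; [exact D|]. apply Agree. }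
  destruct (classic (distinguishing (col c0 a false true))) as [D|nE].
  { exists (col c0 a false true). split; [apply col_S1; exact Hc0|]. split; [exact D|]. apply Agree. }
  exfalso.
  apply (abstract3 (col c0 a false false) (col c0 a true false) (col c0 a false true) a);
    try apply col_S1; try assumption; try apply K1; try apply K2.
  - intros x Hx. unfold col. destruct (dec (eqS1 x 0)); [reflexivity|].
    rewrite (dec_f _ Hx). reflexivity.
  - unfold col. rewrite (dec_f (eqS1 (1/4) 0)) by exact n14_0. rewrite (dec_t (eqS1 (1/4) (1/4))) by apply eqS1_refl.
    reflexivity.
  - intros x Hx. unfold col. destruct (dec (eqS1 x 0)); [reflexivity|].
    destruct (dec (eqS1 x (1/4))); [reflexivity|]. rewrite (dec_f _ Hx). reflexivity.
  - unfold col. rewrite (dec_f (eqS1 (3/4) 0)) by exact n34_0. rewrite (dec_f (eqS1 (3/4) (1/4))) by exact nq14_34.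
    rewrite (dec_t (eqS1 (3/4) (3/4))) by apply eqS1_refl. reflexivity.
Qed.

Definition ginv (g : O2) : O2 := match g with Transl t => Transl (- t) | Refl c => Refl c end.
Definition comp (g h : O2) : O2 :=
  match g, h with
  | Transl s, Transl t => Transl (s + t)
  | Transl s, Refl c => Refl (c + s / 2)
  | Refl c, Transl s => Refl (c - s / 2)
  | Refl c, Refl d => Transl (2 * c - 2 * d)
  end.
Lemma act_comp g h x : act (comp g h) x = act g (act h x).
Proof. destruct g, h; simpl; field. Qed.
Lemma act_inv1 g x : act (ginv g) (act g x) = x.
Proof. destruct g; simpl; ring. Qed.
Lemma act_inv2 g x : act g (act (ginv g) x) = x.
Proof. destruct g; simpl; ring. Qed.
Lemma act_S1 g x y : eqS1 x y -> eqS1 (act g x) (act g y).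
Proof. intros H. destruct g; simpl. s1tr H. s1tr H. Qed.

Lemma P_transport (W W' : R -> Prop) (g : O2) :
  (forall y, W' y <-> exists x, W x /\ eqS1 (act g x) y) -> P W -> P W'.
Proof.
  intros HW PW c0 Hc0.
  assert (Hc1 : on_S1 (fun x => c0 (act g x))) by (intros x y H; apply Hc0; apply act_S1; exact H).
  destruct (PW _ Hc1) as [c [Hc [Hd Hag]]].
  exists (fun y => c (act (ginv g) y)). split; [|split].
  - intros x y H. apply Hc. apply act_S1. exact H.
  - intros h Hh.
    assert (Hid : is_id (comp (ginv g) (comp h g))).
    { apply Hd. intros x. rewrite !act_comp. rewrite (Hh (act g x)). rewrite act_inv1. reflexivity. }
    intros y. specialize (Hid (act (ginv g) y)). rewrite !act_comp, act_inv2 in Hid.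
    apply (act_S1 g) in Hid. rewrite !act_inv2 in Hid. exact Hid.
  - intros y Hy. simpl. rewrite Hag. rewrite act_inv2. reflexivity.
    intros H. apply Hy. apply HW. exists (act (ginv g) y). split; [exact H|]. rewrite act_inv2. apply eqS1_refl.
Qed.

Theorem lemma2p4p2 (W : R -> Prop) (a : R) :
  ~ eqS1 a 0 -> ~ eqS1 a (1/4) -> ~ eqS1 a (1/2) -> ~ eqS1 a (3/4) ->
  congr_sets (W0 a) W ->
  P W.
Proof.
  intros h0 h1 h2 h3 [g Hg]. apply (P_transport (W0 a) W g Hg). apply P_W0; assumption.
Qed.
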